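(* Let $X$ be a compact metric space, $f:X\to X$ continuous and $x\in X$. If $\omega_f(x)$ is totally periodic and totally disconnected, then $\omega_f(x)$ is finite.
   Context: $\omega_f(x)=\{y\in X:\ \exists\, n_i\to+\infty,\ f^{n_i}(x)\to y\}$. It is totally periodic if every point $y\in\omega_f(x)$ satisfies $f^m(y)=y$ for some $m\ge1$. *)

(* Defs.v *)
From HB Require Import structures.
From mathcomp Require Import all_boot all_order all_algebra.
From mathcomp Require Import all_classical all_reals all_analysis.
Set Implicit Arguments. Unset Strict Implicit. Unset Printing Implicit Defensive.
Import Order.TTheory GRing.Theory Num.Theory.
Local Open Scope classical_set_scope.

Definition omega_limit {X : topologicalType} (f : X -> X) (x : X) : set X :=
  [set y | exists n : nat -> nat,
      (forall N : nat, exists M : nat, forall i : nat, (M <= i)%N -> (N <= n i)%N)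
      /\ ((fun i => iter (n i) f x) @ \oo --> y)].

Definition totally_periodic {X : Type} (f : X -> X) (A : set X) : Prop :=
  forall y, A y -> exists m : nat, (1 <= m)%N /\ iter m f y = y.

(* Main.v *)
Require Import Defs.
From HB Require Import structures.
From mathcomp Require Import all_boot all_order all_algebra.
From mathcomp Require Import all_classical all_reals all_analysis.
Set Implicit Arguments. Unset Strict Implicit. Unset Printing Implicit Defensive.
Import Order.TTheory GRing.Theory Num.Theory.
Local Open Scope classical_set_scope.

Section Omega.
Variables (R : realType) (X : pseudoMetricType R).
Hypothesis hX : hausdorff_space X.
Hypothesis cX : compact [set: X].
Variable f : X -> X.
Hypothesis cf : continuous f.
Variable x : X.

Local Notation u := (fun n => iter n f x).
Local Notation Om := (omega_limit f x).

Lemma iter_cont n : continuous (iter n f).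
Proof.
elim: n => [|n IH] y; first exact: cvg_id.
have h := @continuous_comp _ _ _ (iter n f) f y (IH y) (@cf (iter n f y)).
exact h.
Qed.

Lemma iter_comm m n z : iter m f (iter n f z) = iter n f (iter m f z).
Proof. by rewrite -!iterD addnC. Qed.

Lemma per_lemma (w : X) m N j : (1 <= m)%N -> iter m f w = w ->
  iter N f (iter j f w) = iter j f w -> iter N f w = w.
Proof.
move=> m1 hm hN.
have hmj : forall k, iter (m * k)%N f w = w.
  elim=> [|k IH]; first by rewrite muln0.
  by rewrite mulnS iterD IH hm.
have jle : (j <= m * j)%N by rewrite leq_pmull.
have e : w = iter (m * j - j)%N f (iter j f w) by rewrite -iterD subnK // hmj.
by rewrite e iter_comm hN.
Qed.

Lemma om_f y : Om y -> Om (f y).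
Proof.
move=> [n [Hn Hc]]; exists (fun i => (n i).+1); split.
  move=> N; have [M HM] := Hn N; exists M => i /HM; exact: leqW.
have -> : (fun i => iter (n i).+1 f x) = f \o (fun i => iter (n i) f x) by [].
exact: (cvg_comp _ _ Hc (@cf y)).
Qed.

Lemma om_iter k y : Om y -> Om (iter k f y).
Proof. by move=> hy; elim: k => [|k IH] //=; exact: om_f. Qed.

Lemma om_sub_cluster : Om `<=` cluster (u @ \oo).
Proof.
move=> y [n [Hn Hc]] A B [N _ HA] HB.
have [M HM] := Hn N.
have := Hc _ HB => -[K _ HK].
exists (iter (n (maxn M K)) f x); split.
  apply: HA; apply: HM; exact: leq_maxl.
by apply: HK; rewrite /= leq_maxr.
Qed.

Lemma cluster_sub_om : cluster (u @ \oo) `<=` Om.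
Proof.
move=> y hy.
have : forall k : nat, exists m : nat, (k <= m)%N /\
    ball y (k.+1%:R^-1)%R (iter m f x).
  move=> k.
  have hA : (u @ \oo) (u @` [set m | (k <= m)%N]).
    by exists k => // m /= km; exists m.
  have hB : nbhs y (ball y (k.+1%:R^-1)%R) by apply: nbhsx_ballx.
  have [z [[m km <-] bz]] := hy _ _ hA hB.
  by exists m.
move=> /boolp.choice [n Hn].
exists n; split.
  by move=> N; exists N => i Ni; apply: leq_trans Ni (proj1 (Hn i)).
apply/cvg_ballP => e e0.
have := near_infty_natSinv_lt (PosNum e0).
move=> [K _ HK]; exists K => // i /= Ki.
have := proj2 (Hn i); apply: le_ball; apply/ltW; exact: (HK i Ki).
Qed.

Lemma om_cluster : Om = cluster (u @ \oo).
Proof. by apply/seteqP; split; [exact: om_sub_cluster|exact: cluster_sub_om]. Qed.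

Lemma om_closed : closed Om.
Proof.
rewrite om_cluster clusterE; apply: closed_bigI => A _; exact: closed_closure.
Qed.

Lemma sep_closed (A B : set X) : closed A -> closed B -> A `&` B = set0 ->
  exists U V : set X, [/\ open U, open V, A `<=` U, B `<=` V & U `&` V = set0].
Proof.
move=> clA clB AB.
have nrm := compact_normal hX cX.
have hB : set_nbhs A (~` B).
  move=> a Aa; apply: open_nbhs_nbhs; split; first exact: closed_openC.
  by move=> Ba; have : (A `&` B) a by []; rewrite AB.
have [V sV clV] := nrm A clA (~` B) hB.
exists (V°), (~` closure V); split.
- exact: open_interior.
- exact/closed_openC/closed_closure.
- by move=> a Aa; exact: sV.
- by move=> b Bb /clV; apply.
- apply/seteqP; split => // z [/interior_subset Vz]; apply; exact: subset_closure.
Qed.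

Lemma event_open (G : set X) : open G -> Om `<=` G ->
  exists N, forall n, (N <= n)%N -> G (iter n f x).
Proof.
move=> oG OG; apply: contrapT => H.
have H' : forall N, exists n, (N <= n)%N /\ ~ G (iter n f x).
  move=> N; apply: contrapT => HN; apply: H; exists N => n Nn.
  by apply: contrapT => Gn; apply: HN; exists n.
pose F := filter_from [set: nat] (fun N => [set z | exists n, [/\ (N <= n)%N,
   ~ G (iter n f x) & z = iter n f x]]).
have FF : Filter F.
  apply: filter_from_filter; first by exists 0%N.
  move=> i j _ _; exists (maxn i j) => // z [n [mn nG ->]]; split.
    by exists n; split => //; apply: leq_trans mn; exact: leq_maxl.
  by exists n; split => //; apply: leq_trans mn; exact: leq_maxr.
have PF : ProperFilter F.
  apply: filter_from_proper => N _; have [n [Nn nG]] := H' N.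
  by exists (iter n f x); exists n.
have [p [_ cp]] := cX PF (filterT).
have Op : Om p.
  rewrite om_cluster => A B [N _ HA] HB.
  have FN : F [set z | exists n, [/\ (N <= n)%N,
   ~ G (iter n f x) & z = iter n f x]] by exists N.
  have [z [[n [Nn _ ->]] Bz]] := cp _ _ FN HB.
  by exists (iter n f x); split => //; exact: HA.
have FN : F [set z | exists n, [/\ (0 <= n)%N,
   ~ G (iter n f x) & z = iter n f x]] by exists 0%N.
have nG : nbhs p G by apply: open_nbhs_nbhs; split => //; exact: OG.
by have [z [[n [_ nGn ->]] Gz]] := cp _ _ FN nG.
Qed.

Lemma incompress (A B : set X) : closed A -> closed B -> Om = A `|` B ->
  A `&` B = set0 -> A !=set0 -> B !=set0 -> f @` A `<=` A -> False.
Proof.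
move=> clA clB OAB AB [a Aa] [b Bb] fA.
have [U [V [oU oV AU BV UV]]] := sep_closed clA clB AB.
pose U1 := U `&` f @^-1` U.
have oU1 : open U1.
  apply: openI => //; apply: open_comp => // y _; exact: cf.
have oG : open (U1 `|` V) by exact: openU.
have OG : Om `<=` U1 `|` V.
  rewrite OAB => y [Ay|By]; last by right; exact: BV.
  by left; split; [exact: AU|apply: AU; apply: fA; exists y].
have [N HN] := event_open oG OG.
have notUV : forall z, U z -> V z -> False.
  by move=> z Uz Vz; have : (U `&` V) z by []; rewrite UV.
have Oa : Om a by rewrite OAB; left.
have Ob : Om b by rewrite OAB; right.
case: Oa => n [Hn Hc].
have U1a : nbhs a U1.
  by apply: open_nbhs_nbhs; split => //; split; [exact: AU|apply: AU; apply: fA; exists a].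
have [K _ HK] := Hc _ U1a.
have [M HM] := Hn N.
pose n0 := n (maxn M K).
have Nn0 : (N <= n0)%N by apply: HM; exact: leq_maxl.
have U1n0 : U1 (iter n0 f x) by apply: HK; rewrite /= leq_maxr.
have allU1 : forall k, U1 (iter (k + n0) f x).
  elim=> [|k IH] //.
  have Uk : U (iter (k.+1 + n0) f x) by rewrite addSn /=; exact: (proj2 IH).
  have := HN (k.+1 + n0)%N (leq_trans Nn0 (leq_addl _ _)).
  by case=> // Vk; exfalso; exact: notUV Uk Vk.
case: Ob => n' [Hn' Hc'].
have Vb : nbhs b V by apply: open_nbhs_nbhs; split => //; exact: BV.
have [K' _ HK'] := Hc' _ Vb.
have [M' HM'] := Hn' n0.
pose n1 := n' (maxn M' K').
have n01 : (n0 <= n1)%N by apply: HM'; exact: leq_maxl.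
have Vn1 : V (iter n1 f x) by apply: HK'; rewrite /= leq_maxr.
have := allU1 (n1 - n0)%N; rewrite subnK // => -[Un1 _].
exact: notUV Un1 Vn1.
Qed.
Definition piece (C : set X) := [/\ C `<=` Om, closed C & closed (Om `\` C)].

Lemma piece_Om : piece Om.
Proof. by split => //; [exact: om_closed|rewrite setDv; exact: closed0]. Qed.

Lemma pieceI C D : piece C -> piece D -> piece (C `&` D).
Proof.
move=> [CO cC cOC] [DO cD cOD]; split.
- by move=> z [/CO].
- exact: closedI.
- by rewrite setDIr; exact: closedU.
Qed.

Definition Qs (y : X) := \bigcap_(C in [set C | piece C /\ C y]) C.

Lemma Qs_closed y : closed (Qs y).
Proof. by apply: closed_bigI => C [[]]. Qed.

Lemma Qs_sub y : Om y -> Qs y `<=` Om.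
Proof. by move=> Oy z; apply; split => //; exact: piece_Om. Qed.

Lemma piece_sub_open (y : X) (O : set X) : Om y -> open O ->
  Qs y `<=` O -> exists C, [/\ piece C, C y & C `<=` O].
Proof.
move=> Oy oO QO; apply: contrapT => H.
have H' : forall C, piece C -> C y -> exists z, C z /\ ~ O z.
  move=> C pC Cy; apply: contrapT => HC; apply: H; exists C; split => //.
  by move=> z Cz; apply: contrapT => Oz; apply: HC; exists z.
pose F := filter_from [set C | piece C /\ C y] (fun C => C `\` O).
have FF : Filter F.
  apply: filter_from_filter; first by exists Om; split => //; exact: piece_Om.
  move=> C D [pC Cy] [pD Dy]; exists (C `&` D); first by split; [exact: pieceI|].
  by move=> z [[Cz Dz] Oz].
have PF : ProperFilter F.
  by apply: filter_from_proper => C [pC Cy]; have [z [Cz Oz]] := H' C pC Cy; exists z.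
have [p [_ cp]] := cX PF filterT.
have Qp : forall C, piece C /\ C y -> C p.
  move=> C [pC Cy]; have FC : F (C `\` O) by exists C.
  case: pC => _ cC _; apply: cC; rewrite /closure /= => B nB.
  by have [z [[Cz _] Bz]] := cp _ _ FC nB; exists z.
have nO : nbhs p O by apply: open_nbhs_nbhs; split => //; exact: (QO p Qp).
have FO : F (Om `\` O).
  by exists Om => //; split; [exact: piece_Om|].
by have [z [[_ nOz] Oz]] := cp _ _ FO nO.
Qed.

Lemma Qs_aux (y : X) (E0 E1 : set X) : Om y -> Qs y = E0 `|` E1 ->
  separated E0 E1 -> E0 y -> E1 = set0.
Proof.
move=> Oy QE [s1 s2] E0y.
have sub0 : E0 `<=` Qs y by rewrite QE; exact: subsetUl.
have sub1 : E1 `<=` Qs y by rewrite QE; exact: subsetUr.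
have clE0 : closed E0.
  move=> z cz; have := Qs_closed (closureS sub0 cz); rewrite QE => -[//|E1z].
  by have : (closure E0 `&` E1) z by []; rewrite s1.
have clE1 : closed E1.
  move=> z cz; have := Qs_closed (closureS sub1 cz); rewrite QE => -[E0z|//].
  by have : (E0 `&` closure E1) z by []; rewrite s2.
have d01 : E0 `&` E1 = set0 by apply: separated_disjoint; split.
have [U0 [U1 [oU0 oU1 EU0 EU1 U01]]] := sep_closed clE0 clE1 d01.
have QU : Qs y `<=` U0 `|` U1 by rewrite QE => z [/EU0|/EU1]; [left|right].
have [C [pC Cy CU]] := piece_sub_open Oy (openU oU0 oU1) QU.
have nU : forall z, U0 z -> U1 z -> False.
  by move=> z a b; have : (U0 `&` U1) z by []; rewrite U01.
have pC' : piece (C `&` U0).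
  case: pC => CO cC cOC; split.
  - by move=> z [/CO].
  - have -> : C `&` U0 = C `&` ~` U1.
      apply/seteqP; split => z [Cz Hz]; split => //.
        by move=> U1z; exact: nU Hz U1z.
      by case: (CU z Cz).
    by apply: closedI => //; exact: open_closedC.
  - have -> : Om `\` (C `&` U0) = (Om `\` C) `|` (C `&` ~` U0).
      apply/seteqP; split => z.
        move=> [Oz nCU]; have [Cz|nCz] := pselect (C z); last by left.
        by right; split => // U0z; apply: nCU.
      case=> [[Oz nCz]|[Cz nU0z]]; split => //; first by case.
        exact: CO.
      by case.
    apply: closedU => //; apply: closedI => //; exact: open_closedC.
have QC : Qs y `<=` C `&` U0.
  by move=> z Qz; apply: Qz; split => //; split => //; exact: EU0.
apply/seteqP; split => // z E1z.
have [_ U0z] := QC _ (sub1 _ E1z).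
by exfalso; exact: nU U0z (EU1 _ E1z).
Qed.
Lemma Qs_self y : Qs y y.
Proof. exact: (fun C (h : piece C /\ C y) => proj2 h). Qed.

Lemma Qs_connected y : Om y -> connected (Qs y).
Proof.
move=> Oy; apply/connectedP => E [E0 QE sep].
have : (E false `|` E true) y by rewrite -QE; exact: Qs_self.
case=> [Ey|Ey].
- have E1 := Qs_aux Oy QE sep Ey.
  by have [z Ez] := E0 true; rewrite E1 in Ez.
- have QE' : Qs y = E true `|` E false by rewrite setUC.
  rewrite separatedC in sep.
  have E1 := Qs_aux Oy QE' sep Ey.
  by have [z Ez] := E0 false; rewrite E1 in Ez.
Qed.

Lemma piece_nbhd y O : totally_disconnected Om -> Om y -> open O -> O y ->
  exists C, [/\ piece C, C y & C `<=` O].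
Proof.
move=> td Oy oO Oy'; apply: piece_sub_open => // z Qz.
have : connected_component Om y z.
  exists (Qs y) => //; split; [exact: Qs_self|exact: Qs_sub|exact: Qs_connected].
by rewrite (td y Oy) => ->.
Qed.
Definition P N := [set z | iter N f z = z].

Lemma P_closed N : closed (P N).
Proof.
move=> z cz; apply: contrapT => nz.
have : iter N f z != z by apply/eqP.
have hX' := hX; rewrite open_hausdorff in hX'.
move=> /hX' [[A B] /= [/set_mem Az /set_mem Bz] [oA oB /eqP AB]].
have oG : open (B `&` iter N f @^-1` A).
  by apply: openI => //; apply: open_comp => // y _; exact: iter_cont.
have nG : nbhs z (B `&` iter N f @^-1` A) by apply: open_nbhs_nbhs.
have [w [Pw [Bw Aw]]] := cz _ nG.
move: Aw; rewrite /= Pw => Aw.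
by have : (A `&` B) w by []; rewrite AB.
Qed.

Lemma baire : totally_disconnected Om -> totally_periodic f Om -> Om !=set0 ->
  exists N V, [/\ (1 <= N)%N, piece V, V !=set0 & V `<=` P N].
Proof.
move=> td tp O0; apply: contrapT => H.
have H' : forall N V, (1 <= N)%N -> piece V -> V !=set0 -> exists z, V z /\ ~ P N z.
  move=> N V N1 pV V0; apply: contrapT => HV; apply: H; exists N, V; split => //.
  by move=> z Vz; apply: contrapT => nP; apply: HV; exists z.
have step : forall KN : set X * nat, exists K', piece KN.1 -> KN.1 !=set0 ->
    [/\ piece K', K' !=set0, K' `<=` KN.1 & forall z, K' z -> ~ P KN.2.+1 z].
  move=> [K N] /=.
  have [[pK K0]|no] := pselect (piece K /\ K !=set0); last first.
    by exists K => pK K0; exfalso; apply: no.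
  have [z [Kz nPz]] := H' N.+1 K erefl pK K0.
  have oO : open (~` (Om `\` K) `&` ~` P N.+1).
    apply: openI; apply: closed_openC; [by case: pK|exact: P_closed].
  have Oz : (~` (Om `\` K) `&` ~` P N.+1) z by split => // [[]].
  have OzK : Om z by case: pK => /(_ _ Kz).
  have [C [pC Cz CO]] := piece_nbhd td OzK oO Oz.
  exists C => _ _; split => //; first by exists z.
    move=> w Cw; have [nOK _] := CO _ Cw; apply: contrapT => nKw; apply: nOK.
    by split => //; case: pC => /(_ _ Cw).
  by move=> w /CO [].
have [g Hg] := boolp.choice step.
pose K := fix K (n : nat) : set X := if n is n'.+1 then g (K n', n') else Om.
have HK : forall n, piece (K n) /\ K n !=set0.
  elim=> [|n [pK K0]]; first by split => //; exact: piece_Om.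
  by have [] := Hg (K n, n) pK K0.
have HKS : forall n, K n.+1 `<=` K n.
  by move=> n; have [pK K0] := HK n; have [] := Hg (K n, n) pK K0.
have HKP : forall n z, K n.+1 z -> ~ P n.+1 z.
  by move=> n; have [pK K0] := HK n; have [] := Hg (K n, n) pK K0.
have Kdec : forall n m, (n <= m)%N -> K m `<=` K n.
  move=> n; elim=> [|m IH]; first by rewrite leqn0 => /eqP ->.
  rewrite leq_eqVlt => /orP[/eqP ->//|]; rewrite ltnS => nm.
  exact: subset_trans (HKS m) (IH nm).
pose F := filter_from [set: nat] K.
have FF : Filter F.
  apply: filter_from_filter; first by exists 0%N.
  move=> i j _ _; exists (maxn i j) => // z Kz; split.
    exact: (Kdec _ _ (leq_maxl i j)).
  exact: (Kdec _ _ (leq_maxr i j)).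
have PF : ProperFilter F by apply: filter_from_proper => n _; exact: (proj2 (HK n)).
have [p [_ cp]] := cX PF filterT.
have Kp : forall n, K n p.
  move=> n; have [[_ cK _] _] := HK n; apply: cK; rewrite /closure /= => B nB.
  have FK : F (K n) by exists n.
  exact: cp _ _ FK nB.
have [m [m1 hm]] := tp p (Kp 0%N).
case: m m1 hm => // m _ hm.
exact: HKP (Kp m.+1) hm.
Qed.
Definition Wset N (V : set X) :=
  [set w | exists k, (k < N)%N /\ exists v, V v /\ w = iter k f v].

Lemma Wset_compact n V : closed V -> compact (Wset n V).
Proof.
move=> cV; have cpV : compact V by exact: subclosed_compact cV cX (subsetT _).
elim: n => [|n IH].
  have -> : Wset 0 V = set0 by apply/seteqP; split => // w [k []].
  exact: compact0.
have -> : Wset n.+1 V = Wset n V `|` [set iter n f v | v in V].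
  apply/seteqP; split => w.
    move=> [k [kn [v [Vv ->]]]]; move: kn; rewrite ltnS leq_eqVlt => /orP[/eqP ->|kn].
      by right; exists v.
    by left; exists k; split => //; exists v.
  case=> [[k [kn [v [Vv ->]]]]|[v Vv <-]].
    by exists k; split; [exact: ltnW|exists v].
  by exists n; split => //; exists v.
apply: compactU => //; apply: continuous_compact => //.
apply: continuous_subspaceT; exact: iter_cont.
Qed.

Lemma core N V z : (1 <= N)%N -> piece V -> V !=set0 -> V `<=` P N ->
  totally_periodic f Om -> Om z -> ~ Wset N V z -> False.
Proof.
move=> N1 [VO cV cOV] [v0 Vv0] VP tp Oz nWz.
have WO : Wset N V `<=` Om by move=> w [k [_ [v [Vv ->]]]]; apply: om_iter; exact: VO.
have cW : closed (Wset N V) by apply: compact_closed => //; exact: Wset_compact.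
have cOW : closed (Om `\` Wset N V).
  move=> z' cz'.
  have Oz' : Om z' by apply: om_closed; apply: (closureS _ cz'); move=> ? [].
  split => // -[k [kN [v [Vv ez']]]].
  have kN' : (k <= N)%N by exact: ltnW.
  have oG : open (iter (N - k) f @^-1` (~` (Om `\` V))).
    apply: open_comp; [move=> y _; exact: iter_cont|exact: closed_openC].
  have Gz' : (iter (N - k) f @^-1` (~` (Om `\` V))) z'.
    by rewrite /= ez' -iterD subnK // VP // => -[_ /(_ Vv)].
  have [w [[Ow nWw] Gw]] := cz' _ (open_nbhs_nbhs (conj oG Gz')).
  have Vw : V (iter (N - k) f w).
    apply: contrapT => nV; apply: Gw; split => //; exact: om_iter.
  have [m [m1 hm]] := tp w Ow.
  have Pw : iter N f w = w by apply: (per_lemma (j := (N - k)%N) m1 hm); exact: VP _ Vw.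
  apply: nWw; exists k; split => //; exists (iter (N - k) f w); split => //.
  by rewrite -iterD subnKC.
apply: (@incompress (Wset N V) (Om `\` Wset N V)) => //.
- apply/seteqP; split => w; first by have [Ww|nWw] := pselect (Wset N V w); [left|right].
  by case=> [/WO|[]].
- by apply/seteqP; split => // w [Ww []].
- by exists v0; exists 0%N; split => //; exists v0.
- by exists z.
- move=> _ [w [k [kN [v [Vv ->]]]] <-].
  have : (k.+1 <= N)%N by [].
  rewrite leq_eqVlt => /orP[/eqP ek|kN'].
    by exists 0%N; split => //; exists v; split => //; rewrite /= -[in RHS](VP v Vv) -ek.
  by exists k.+1; split => //; exists v.
Qed.
Lemma main_lemma : totally_periodic f Om -> totally_disconnected Om -> finite_set Om.
Proof.
move=> tp td; apply: contrapT => inf.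
have [y Oy] : Om !=set0.
  apply: contrapT => e; apply: inf.
  have -> : Om = set0 by apply/seteqP; split => // w Ow; apply: e; exists w.
  exact: finite_set0.
have [N [V [N1 pV V0 VP]]] := baire td tp (ex_intro _ y Oy).
have [[z [Oz nPz]]|all] := pselect (exists z, Om z /\ ~ P N z).
  apply: (core N1 pV V0 VP tp Oz) => -[k [kN [v [Vv ez]]]]; apply: nPz.
  by rewrite /P /= ez iter_comm (VP v Vv).
have allP : Om `<=` P N.
  by move=> w Ow; apply: contrapT => nP; apply: all; exists w.
pose S := [set iter j f y | j in `I_N.+1].
have [z [Oz nSz]] : exists z, Om z /\ ~ S z.
  apply: contrapT => e; apply: inf; apply: (@sub_finite_set _ _ S).
    by move=> w Ow; apply: contrapT => nS; apply: e; exists w.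
  exact/finite_image/finite_II.
pose T := [set iter j f z | j in `I_N.+1].
have cT : closed T.
  apply: (proj1 accessible_finite_set_closed (hausdorff_accessible hX)).
  exact/finite_image/finite_II.
have nTy : ~ T y.
  move=> [j jN ejy]; apply: nSz; exists (N - j)%N; first by rewrite /= ltnS leq_subr.
  have jN' : (j <= N)%N by move: jN; rewrite /= ltnS.
  by rewrite -ejy -iterD subnK //; exact: allP.
have [V' [pV' V'y V'T]] := piece_nbhd td Oy (closed_openC cT) nTy.
have V'P : V' `<=` P N by move=> w V'w; apply: allP; case: pV' => /(_ _ V'w).
apply: (core N1 pV' (ex_intro _ y V'y) V'P tp Oz) => -[k [kN [v [V'v ez]]]].
apply: (V'T v V'v); exists (N - k)%N; first by rewrite /= ltnS leq_subr.
by rewrite ez -iterD subnK ?(ltnW kN) // (V'P v V'v).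
Qed.
End Omega.

Unset Implicit Arguments.
Set Strict Implicit.

Theorem lemma2p5 (R : realType) (X : pseudoMetricType R)
  (hX : hausdorff_space X) (cX : compact [set: X])
  (f : X -> X) (cf : continuous f) (x : X) :
  totally_periodic f (omega_limit f x) ->
  totally_disconnected (omega_limit f x) ->
  finite_set (omega_limit f x).
Proof. exact: main_lemma. Qed.
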